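(* Let $d\ge2$, $x\in\mathbb{R}^d$, $\theta\in\{\pm1\}^d$, $p := |\{l:\theta_l=1\}|-1$, and $v := x - \frac{\theta^\top x - p}{d}\theta$. Suppose $v\notin[0,1]^d$ and that there is exactly one index $i\in\{1,\dots,d\}$ with ($v_i>1$ and $\theta_i=1$) or ($v_i<0$ and $\theta_i=-1$). Set $\widetilde p := p-1$ if $v_i>1$ and $\widetilde p:=p$ if $v_i<0$. Let $\widetilde x$ and $\widetilde\theta$ be obtained from $x$ and $\theta$ by deleting the $i$-th component (keeping the original indices $j\neq i$), and let $\widetilde v := \widetilde x - \frac{\widetilde\theta^\top\widetilde x - \widetilde p}{d-1}\widetilde\theta$. Then for every $j\ne i$: (i) if $\theta_j = 1$ then $\widetilde v_j > v_j$; (ii) if $\theta_j=-1$ then $\widetilde v_j< v_j$. *)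

(* Defs.v *)
From mathcomp Require Import all_boot all_order all_algebra.
Set Implicit Arguments. Unset Strict Implicit. Unset Printing Implicit Defensive.
Import Order.TTheory GRing.Theory Num.Theory.
Local Open Scope ring_scope.

(* p := |{l : theta_l = 1}| - 1, as an element of R (it may be -1). *)
Definition pcount (R : realFieldType) (d : nat) (theta : 'I_d -> R) : R :=
  (#|[set l : 'I_d | theta l == 1]|)%:R - 1.

Definition vproj (R : realFieldType) (d : nat) (x theta : 'I_d -> R) (p : R)
  : 'I_d -> R :=
  fun j => x j - ((\sum_(k < d) theta k * x k) - p) / d%:R * theta j.

(* tilde v, with the i-th component deleted, keeping the original indices
   j <> i (its value at i is meaningless and never used):
   tilde v_j := x_j - (sum_{k<>i} theta_k x_k - pt)/(d-1) * theta_j *)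
Definition vproj_del (R : realFieldType) (d : nat) (i : 'I_d)
  (x theta : 'I_d -> R) (pt : R) : 'I_d -> R :=
  fun j => x j - ((\sum_(k < d | k != i) theta k * x k) - pt) / (d%:R - 1)
                 * theta j.

Definition viol (R : realFieldType) (d : nat) (v theta : 'I_d -> R) (l : 'I_d)
  : Prop :=
  (1 < v l /\ theta l = 1) \/ (v l < 0 /\ theta l = -1).

(* Main.v *)
Require Import Defs.
From mathcomp Require Import all_boot all_order all_algebra.
From mathcomp Require Import ring lra.
Import Order.TTheory GRing.Theory Num.Theory.
Local Open Scope ring_scope.

Theorem theorem8 (R : realFieldType) (d : nat) (x theta : 'I_d -> R)
  (i : 'I_d) :
  (2 <= d)%N ->
  (forall l, theta l = 1 \/ theta l = -1) ->
  let p := pcount theta in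
  let v := vproj x theta p in
  (exists l, v l < 0 \/ 1 < v l) ->
  viol v theta i ->
  (forall j, viol v theta j -> j = i) ->
  let pt := if 1 < v i then p - 1 else p in
  let vt := vproj_del i x theta pt in
  forall j, j != i ->
    (theta j = 1 -> v j < vt j) /\ (theta j = -1 -> vt j < v j).
Proof.
move=> hd hth p v _ hvi _ pt vt j hj.
have D2 : 2 <= d%:R :> R by rewrite (ler_nat R 2 d).
set D := d%:R in D2 *.
set S := \sum_(k < d) theta k * x k.
set S' := \sum_(k < d | k != i) theta k * x k.
have hS : S = theta i * x i + S' by rewrite /S (bigD1 i).
set lam := (S - p) / D.
have D0 : D != 0 by apply/eqP => h; rewrite h in D2; lra.
have eS : S - p = lam * D by rewrite /lam divfK.
have vi : v i = x i - lam * theta i by [].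
have key : (S' - pt) / (D - 1) < lam.
  rewrite ltr_pdivrMr; last by lra.
  rewrite /pt; case: hvi => [[h1 ht]|[h1 ht]].
    rewrite h1; rewrite ht mul1r in hS; rewrite ht mulr1 in vi.
    rewrite mulrBr mulr1; lra.
  have -> : (1 < v i) = false by apply/negbTE; rewrite -leNgt; lra.
  rewrite ht mulN1r in hS; rewrite ht mulrN1 in vi.
  rewrite mulrBr mulr1; lra.
have evt : forall j, vt j = x j - (S' - pt) / (D - 1) * theta j by [].
have ev : forall j, v j = x j - lam * theta j by [].
split=> ht; rewrite evt ev ht; lra.
Qed.
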